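(* Let $K$ be a class of partial functions from $\mathbb{N}^k$ to $\mathbb{N}$ (of various arities $k\ge1$) satisfying: (1) $K$ contains all partial recursive functions and is closed under substitution, primitive recursion and the $\mu$-operator; (2) for every unary function $f\in K$ there exist a set $M\subseteq\mathbb{N}$ and unary functions $\alpha,\omega\in K$ whose domains contain $M$, such that the indicator function of $M$ belongs to $K$, and for all $x,y$, $f(x)$ is defined and equals $y$ iff there is $m\in M$ with $\alpha(m)=x$ and $\omega(m)=y$; (3) there exists a binary function $F\in K$ such that for every unary $f\in K$ there is $n$ with $F(n,\cdot)=f$. Let $F$ be such a binary universal function. Then an arbitrary partial function $f$ (of any arity) belongs to $K$ if and only if $f$ is partial recursive relative to $F$.
   Context: Fix a standard recursive bijective encoding of tuples of natural numbers by natural numbers. The graph of a partial function $g:\mathbb{N}^k\to\mathbb{N}$ is the set of codes of tuples $(x_1,\dots,x_k,y)$ with $g(x_1,\dots,x_k)$ defined and equal to $y$. For sets $X,Y\subseteq\mathbb{N}$, $X$ is enumeration reducible to $Y$ if there is a recursively enumerable set $W$ of pairs $(x,u)$ such that $x\in X$ iff there exists $u$ with $(x,u)\in W$ and $D_u\subseteq Y$, where $D_u$ is the finite set with canonical index $u$. A partial function $f$ is partial recursive relative to a partial function $F$ if the graph of $f$ is enumeration reducible to the graph of $F$. *)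

(* Defs.v *)
From mathcomp Require Import all_boot.
Set Implicit Arguments. Unset Strict Implicit. Unset Printing Implicit Defensive.

Definition pfun (k : nat) := k.-tuple nat -> option nat.

Definition zero_fn (k : nat) : pfun k := fun _ => Some 0.
Definition succ_fn : pfun 1 := fun x => Some (thead x).+1.
Definition proj_fn (k : nat) (i : 'I_k) : pfun k := fun x => Some (tnth x i).

Definition subst_fn (m k : nat) (h : pfun m) (gs : 'I_m -> pfun k) : pfun k :=
  fun x => if [forall i, gs i x != None]
           then h [tuple odflt 0 (gs i x) | i < m] else None.

(* Primitive recursion (recursion variable first):
   f(0, x) = g(x),  f(n+1, x) = h(n, f(n,x), x). *)
Fixpoint prec_aux (k : nat) (g : pfun k) (h : pfun k.+2) (x : k.-tuple nat)
  (n : nat) : option nat :=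
  match n with
  | 0 => g x
  | n'.+1 => match prec_aux g h x n' with
             | Some v => h (cons_tuple n' (cons_tuple v x))
             | None => None
             end
  end.
Definition prec_fn (k : nat) (g : pfun k) (h : pfun k.+2) : pfun k.+1 :=
  fun t => prec_aux g h (behead_tuple t) (thead t).

(* f is obtained from g by the mu-operator (search variable first):
   f(x) = least y with g(y,x) = 0 and g(z,x) defined (and nonzero) for z < y. *)
Definition is_mu (k : nat) (g : pfun k.+1) (f : pfun k) : Prop :=
  forall x y, f x = Some y <->
    (g (cons_tuple y x) = Some 0 /\
     forall z, z < y -> exists v, g (cons_tuple z x) = Some v.+1).

Inductive PR : forall k, pfun k -> Prop :=
| PR_zero k : PR (@zero_fn k)
| PR_succ : PR succ_fn
| PR_proj k (i : 'I_k) : PR (proj_fn i)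
| PR_subst m k (h : pfun m) (gs : 'I_m -> pfun k) :
    PR h -> (forall i, PR (gs i)) -> PR (subst_fn h gs)
| PR_prec k (g : pfun k) (h : pfun k.+2) : PR g -> PR h -> PR (prec_fn g h)
| PR_mu k (g : pfun k.+1) (f : pfun k) : PR g -> is_mu g f -> PR f.

Definition cpair (x y : nat) : nat := (x + y) * (x + y).+1 %/ 2 + y.
Fixpoint code_seq (s : seq nat) : nat :=
  match s with
  | [::] => 0
  | [:: x] => x
  | x :: s' => cpair x (code_seq s')
  end.

Definition graph (k : nat) (g : pfun k) (z : nat) : Prop :=
  exists (x : k.-tuple nat) (y : nat), g x = Some y /\ z = code_seq (rcons x y).

(* canonical index of finite sets: D_u = { i | bit i of u is 1 } *)
Definition Dfin (u i : nat) : bool := odd (u %/ 2 ^ i).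

Definition re_set (W : nat -> Prop) : Prop :=
  exists g : pfun 1, PR g /\ forall z, W z <-> g [tuple z] <> None.

Definition enum_reducible (X Y : nat -> Prop) : Prop :=
  exists W : nat -> Prop, re_set W /\
    forall x, X x <-> exists u, W (cpair x u) /\ forall i, Dfin u i -> Y i.

Definition rel_rec (k l : nat) (f : pfun k) (F : pfun l) : Prop :=
  enum_reducible (graph f) (graph F).

Definition class := forall k, pfun k -> Prop.

Definition hyp1 (K : class) : Prop :=
  (forall k (f : pfun k), PR f -> K k f) /\
  (forall m k (h : pfun m) (gs : 'I_m -> pfun k),
      K m h -> (forall i, K k (gs i)) -> K k (subst_fn h gs)) /\
  (forall k (g : pfun k) (h : pfun k.+2), K k g -> K k.+2 h -> K k.+1 (prec_fn g h)) /\
  (forall k (g : pfun k.+1) (f : pfun k), K k.+1 g -> is_mu g f -> K k f).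

Definition indicator (M : nat -> Prop) (c : pfun 1) : Prop :=
  forall x, (M x -> c [tuple x] = Some 1) /\ (~ M x -> c [tuple x] = Some 0).

Definition hyp2 (K : class) : Prop :=
  forall f : pfun 1, K 1 f ->
    exists (M : nat -> Prop) (alpha omega chi : pfun 1),
      K 1 alpha /\ K 1 omega /\
      (forall m, M m -> alpha [tuple m] <> None /\ omega [tuple m] <> None) /\
      K 1 chi /\ indicator M chi /\
      forall x y, f [tuple x] = Some y <->
        exists m, M m /\ alpha [tuple m] = Some x /\ omega [tuple m] = Some y.

Definition universal (K : class) (F : pfun 2) : Prop :=
  forall f : pfun 1, K 1 f -> exists n, forall x, F [tuple n; x] = f [tuple x].

Definition hyp3 (K : class) : Prop :=
  exists F : pfun 2, K 2 F /\ universal K F.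

(* Main.v *)
Require Import Defs.
From mathcomp Require Import all_boot zify.
From Stdlib Require Import FunctionalExtensionality ClassicalDescription.
Set Implicit Arguments. Unset Strict Implicit. Unset Printing Implicit Defensive.

Definition clos (C : class) : Prop :=
  [/\ (forall k, C k (@zero_fn k)), C 1 succ_fn, (forall k (i : 'I_k), C k (proj_fn i)),
  (forall m k (h : pfun m) (gs : 'I_m -> pfun k), C m h -> (forall i, C k (gs i)) -> C k (subst_fn h gs)) &
  (forall k (g : pfun k) (h : pfun k.+2), C k g -> C k.+2 h -> C k.+1 (prec_fn g h)) /\
  (forall k (g : pfun k.+1) (f : pfun k), C k.+1 g -> is_mu g f -> C k f)].

Lemma closed_PR : clos PR.
Proof.
split.
- exact: PR_zero.
- exact: PR_succ.
- exact: PR_proj.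
- exact: PR_subst.
- split; [exact: PR_prec | exact: PR_mu].
Qed.

Lemma closed_K K : hyp1 K -> clos K.
Proof.
case=> hPR [hs [hp hm]]; split => //.
- by move=> k; apply: hPR; apply: PR_zero.
- by apply: hPR; apply: PR_succ.
- by move=> k i; apply: hPR; apply: PR_proj.
Qed.

Definition muf (P : nat -> bool) : option nat :=
  match excluded_middle_informative (exists n, P n) with
  | left H => Some (ex_minn H)
  | right _ => None
  end.

Lemma muf_spec (P : nat -> bool) y : muf P = Some y <-> P y /\ forall z, z < y -> ~~ P z.
Proof.
rewrite /muf; case: excluded_middle_informative => [H|H].
- case: ex_minnP => m Pm mmin; split.
  + case=> <-; split => // z zm; apply/negP => Pz; have := mmin z Pz; lia.
  + case=> Py ymin; congr Some.
    have my := mmin y Py.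
    case: (ltngtP m y) => // ltmy; first by move: (ymin m ltmy); rewrite Pm.
    by have := leq_trans ltmy my; rewrite ltnn.
- split => //; case=> Py _; case: H; by exists y.
Qed.

Lemma muf_none (P : nat -> bool) : muf P = None <-> ~ exists n, P n.
Proof.
by rewrite /muf; case: excluded_middle_informative => [H|H]; split => // /(_ H).
Qed.

Lemma muf_eq (P : nat -> bool) y : P y -> (forall z, z < y -> ~~ P z) -> muf P = Some y.
Proof. by move=> ? ?; apply/muf_spec. Qed.

Lemma muf_ex (P : nat -> bool) y : P y -> exists w, muf P = Some w /\ P w.
Proof.
move=> Py; case E: (muf P) => [w|].
- by move/muf_spec: E => [? _]; exists w.
- by move/muf_none: E; case; exists y.
Qed.

Definition nth0 k (t : k.-tuple nat) i := nth 0 t i.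

Section Closed.
Variable C : class.
Hypothesis hC : clos C.

Lemma C_ext k (f g : pfun k) : C f -> (forall x, f x = g x) -> C g.
Proof.
move=> Cf e; have -> : g = f by apply: functional_extensionality => x; rewrite e.
by [].
Qed.

Definition Tot k (f : k.-tuple nat -> nat) := C (fun x => Some (f x)).
Arguments Tot [k] f.

Lemma Tot_ext k (f g : k.-tuple nat -> nat) : Tot f -> (forall x, f x = g x) -> Tot g.
Proof. by move=> Tf e; apply: C_ext Tf _ => x; rewrite e. Qed.

Lemma C_compT m k (h : pfun m) (G : k.-tuple nat -> m.-tuple nat) :
  C h -> (forall i, i < m -> Tot (fun x => nth 0 (G x) i)) -> C (fun x => h (G x)).
Proof.
case: hC => _ _ _ hs _ Ch TG.
have := hs m k h (fun (i : 'I_m) x => Some (nth 0 (G x) i)) Ch (fun i => TG i (ltn_ord i)).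
move/C_ext; apply => x; rewrite /subst_fn.
have -> : [forall i : 'I_m, Some (nth 0 (G x) i) != None] by apply/forallP.
congr h; apply: eq_from_tnth => i; by rewrite tnth_mktuple /= (tnth_nth 0).
Qed.

Lemma Tot_compT m k (h : m.-tuple nat -> nat) (G : k.-tuple nat -> m.-tuple nat) :
  Tot h -> (forall i, i < m -> Tot (fun x => nth 0 (G x) i)) -> Tot (fun x => h (G x)).
Proof. exact: C_compT. Qed.

Lemma Tot_nth k i : i < k -> Tot (fun t : k.-tuple nat => nth 0 t i).
Proof.
case: hC => _ _ hp _ _ ik; rewrite /Tot.
apply: C_ext (hp k (Ordinal ik)) _ => x; by rewrite /proj_fn (tnth_nth 0).
Qed.

Lemma Tot_const k c : Tot (fun _ : k.-tuple nat => c).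
Proof.
case: hC => hz hsu _ _ _; elim: c => [|c IH]; first exact: hz.
apply: (C_compT (G := fun x : k.-tuple nat => [tuple c]) hsu).
by case => // _; apply: Tot_ext IH _.
Qed.

End Closed.

Fixpoint totrec k (g : k.-tuple nat -> nat) (h : k.+2.-tuple nat -> nat) (x : k.-tuple nat) n :=
  if n is n'.+1 then h (cons_tuple n' (cons_tuple (totrec g h x n') x)) else g x.

Lemma theadE k (t : k.+1.-tuple nat) : thead t = nth 0 t 0.
Proof. by rewrite /thead (tnth_nth 0). Qed.

Lemma beheadE k (t : k.+1.-tuple nat) i : nth 0 (behead_tuple t) i = nth 0 t i.+1.
Proof. by rewrite /= nth_behead. Qed.

Section Arith.
Variable C : class.
Hypothesis hC : clos C.
Notation Tot := (Tot C).

Lemma Tot_rec k (g : k.-tuple nat -> nat) (h : k.+2.-tuple nat -> nat) :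
  Tot g -> Tot h -> Tot (fun t : k.+1.-tuple nat => totrec g h (behead_tuple t) (thead t)).
Proof.
case: hC => _ _ _ _ [hp _] Tg Th; apply: C_ext (hp _ _ _ Tg Th) _ => x.
rewrite /prec_fn; elim: (thead x) => //= n -> //.
Qed.

Definition Tot1 (f : nat -> nat) := Tot (fun t : 1.-tuple nat => f (thead t)).
Definition Tot2 (f : nat -> nat -> nat) := Tot (fun t : 2.-tuple nat => f (nth 0 t 0) (nth 0 t 1)).

Lemma Tot_app1 f k (a : k.-tuple nat -> nat) : Tot1 f -> Tot a -> Tot (fun x => f (a x)).
Proof.
move=> Tf Ta; apply: (Tot_compT hC (G := fun x => [tuple a x]) Tf).
by case => // _; apply: Tot_ext Ta _.
Qed.

Lemma Tot_app2 f k (a b : k.-tuple nat -> nat) : Tot2 f -> Tot a -> Tot b -> Tot (fun x => f (a x) (b x)).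
Proof.
move=> Tf Ta Tb; apply: (Tot_compT hC (G := fun x => [tuple a x; b x]) Tf).
by move=> [|[|i]].
Qed.

Lemma Tot1_succ : Tot1 succn.
Proof. by case: hC. Qed.

Lemma TotS k (a : k.-tuple nat -> nat) : Tot a -> Tot (fun x => (a x).+1).
Proof. exact: Tot_app1 Tot1_succ. Qed.

Lemma Tot2_add : Tot2 addn.
Proof.
have := @Tot_rec 1 (fun x => nth 0 x 0) (fun t => (nth 0 t 1).+1) (Tot_nth hC (isT : 0 < 1)).
move/(_ (TotS (Tot_nth hC (isT : 1 < 3)))) => H.
apply: Tot_ext H _ => t.
have -> : behead_tuple t = [tuple nth 0 t 1].
  by apply: eq_from_tnth => i; rewrite (ord1 i) /= (tnth_nth 0) /= nth_behead.
by rewrite theadE; elim: (nth 0 t 0) => //= n ->.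
Qed.

Lemma TotD k (a b : k.-tuple nat -> nat) : Tot a -> Tot b -> Tot (fun x => a x + b x).
Proof. exact: Tot_app2 Tot2_add. Qed.


Lemma Tot2_mul : Tot2 muln.
Proof.
have := @Tot_rec 1 (fun _ => 0) (fun t => nth 0 t 1 + nth 0 t 2) (Tot_const hC _ 0).
move/(_ (TotD (Tot_nth hC (isT : 1 < 3)) (Tot_nth hC (isT : 2 < 3)))) => H.
apply: Tot_ext H _ => t; rewrite theadE.
elim: (nth 0 t 0) => //= n ->; rewrite beheadE; lia.
Qed.

Lemma TotM k (a b : k.-tuple nat -> nat) : Tot a -> Tot b -> Tot (fun x => a x * b x).
Proof. exact: Tot_app2 Tot2_mul. Qed.

Lemma Tot1_pred : Tot1 predn.
Proof.
have := @Tot_rec 0 (fun _ => 0) (fun t => nth 0 t 0) (Tot_const hC _ 0).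
move/(_ (Tot_nth hC (isT : 0 < 2))) => H.
apply: Tot_ext H _ => t; rewrite theadE.
by case: (nth 0 t 0).
Qed.

Lemma Tot2_subr : Tot2 (fun a b => b - a).
Proof.
have := @Tot_rec 1 (fun x => nth 0 x 0) (fun t => (nth 0 t 1).-1) (Tot_nth hC (isT : 0 < 1)).
move/(_ (Tot_app1 Tot1_pred (Tot_nth hC (isT : 1 < 3)))) => H.
apply: Tot_ext H _ => t; rewrite theadE.
elim: (nth 0 t 0) => /=; first by rewrite nth_behead subn0.
move=> n ->; lia.
Qed.

Lemma TotB k (a b : k.-tuple nat -> nat) : Tot a -> Tot b -> Tot (fun x => a x - b x).
Proof. move=> Ta Tb; exact: Tot_app2 Tot2_subr Tb Ta. Qed.

Lemma Tot1_iszero : Tot1 (fun n => n == 0).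
Proof.
have := @Tot_rec 0 (fun _ => 1) (fun t => 0) (Tot_const hC _ 1) (Tot_const hC _ 0).
move=> H; apply: Tot_ext H _ => t; rewrite theadE.
by case: (nth 0 t 0).
Qed.

Lemma Tot_iszero k (a : k.-tuple nat -> nat) : Tot a -> Tot (fun x => a x == 0).
Proof. exact: Tot_app1 Tot1_iszero. Qed.

Lemma Tot_eqn k (a b : k.-tuple nat -> nat) : Tot a -> Tot b -> Tot (fun x => a x == b x).
Proof.
move=> Ta Tb; apply: Tot_ext (Tot_iszero (TotD (TotB Ta Tb) (TotB Tb Ta))) _ => x.
case: eqP; case: eqP => //; lia.
Qed.

Lemma Tot_andb k (a b : k.-tuple nat -> bool) : Tot a -> Tot b -> Tot (fun x => a x && b x).
Proof. move=> Ta Tb; apply: Tot_ext (TotM Ta Tb) _ => x; by case: (a x); case: (b x). Qed.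

Lemma Tot_negb k (a : k.-tuple nat -> bool) : Tot a -> Tot (fun x => ~~ a x).
Proof. move=> Ta; apply: Tot_ext (Tot_iszero Ta) _ => x; by case: (a x). Qed.

Lemma Tot_implb k (a b : k.-tuple nat -> bool) : Tot a -> Tot b -> Tot (fun x => a x ==> b x).
Proof. move=> Ta Tb; apply: Tot_ext (Tot_negb (Tot_andb Ta (Tot_negb Tb))) _ => x; by case: (a x); case: (b x). Qed.

Lemma Tot1_exp2 : Tot1 (fun n => 2 ^ n).
Proof.
have := @Tot_rec 0 (fun _ => 1) (fun t => nth 0 t 1 + nth 0 t 1) (Tot_const hC _ 1).
move/(_ (TotD (Tot_nth hC (isT : 1 < 2)) (Tot_nth hC (isT : 1 < 2)))) => H.
apply: Tot_ext H _ => t; rewrite theadE.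
elim: (nth 0 t 0) => //= n ->; rewrite expnS; lia.
Qed.

Lemma Tot1_odd : Tot1 (fun n => odd n).
Proof.
have := @Tot_rec 0 (fun _ => 0) (fun t => 1 - nth 0 t 1) (Tot_const hC _ 0).
move/(_ (TotB (Tot_const hC _ 1) (Tot_nth hC (isT : 1 < 2)))) => H.
apply: Tot_ext H _ => t; rewrite theadE.
elim: (nth 0 t 0) => //= n ->; by case: (odd n).
Qed.

Definition tri n := n * n.+1 %/ 2.

Lemma triS n : tri n.+1 = tri n + n.+1.
Proof. rewrite /tri; nia. Qed.

Lemma Tot1_tri : Tot1 tri.
Proof.
have := @Tot_rec 0 (fun _ => 0) (fun t => nth 0 t 1 + (nth 0 t 0).+1) (Tot_const hC _ 0).
move/(_ (TotD (Tot_nth hC (isT : 1 < 2)) (TotS (Tot_nth hC (isT : 0 < 2))))) => H.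
apply: Tot_ext H _ => t; rewrite theadE.
elim: (nth 0 t 0) => //= n ->; by rewrite triS.
Qed.

End Arith.


Fixpoint ball n (p : nat -> bool) := if n is n'.+1 then ball n' p && p n' else true.
Definition bex n (p : nat -> bool) := ~~ ball n (fun i => ~~ p i).

Lemma ballP n p : ball n p <-> forall i, i < n -> p i.
Proof.
elim: n => [|n IH] /=; first by split => // _ i.
split.
- move/andP=> [/IH H pn] i; rewrite ltnS leq_eqVlt; case/orP => [/eqP -> //|]; exact: H.
- move=> H; apply/andP; split; last exact: H.
  by apply/IH => i ilt; apply: H; apply: ltnW.
Qed.

Lemma bexP n p : bex n p <-> exists i, i < n /\ p i.
Proof.
rewrite /bex; split.
- move=> H; apply: Classical_Prop.NNPP => N; move/negP: H; apply; apply/ballP => i ilt.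
  by apply/negP => pi; apply: N; exists i.
- by case=> i [ilt pi]; apply/negP => /ballP /(_ i ilt); rewrite pi.
Qed.

Lemma behead_cons k a (x : k.-tuple nat) : behead_tuple (cons_tuple a x) = x.
Proof. exact: val_inj. Qed.

Lemma thead_cons k a (x : k.-tuple nat) : thead (cons_tuple a x) = a.
Proof. by rewrite theadE. Qed.

Section Mu.
Variable C : class.
Hypothesis hC : clos C.
Notation Tot := (Tot C).
Notation Tot1 := (Tot1 C).
Notation Tot2 := (Tot2 C).

Lemma C_mu k (P : k.+1.-tuple nat -> nat) :
  Tot P -> C (fun x => muf (fun w => P (cons_tuple w x) == 0)).
Proof.
case: hC => _ _ _ _ [_ hm] TP; apply: (hm _ _ _ TP) => x y; rewrite muf_spec; split.
- case=> /eqP -> H; split => // z /H; case: (P _) => // v _; by exists v.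
- by case=> [[->] H]; split => // z /H [v [->]].
Qed.

Lemma Tot_muB k (q : k.+1.-tuple nat -> bool) :
  Tot (fun t => q t : nat) -> (forall x, exists w, q (cons_tuple w x)) ->
  Tot (fun x => odflt 0 (muf (fun w => q (cons_tuple w x)))).
Proof.
move=> Tq ex; have := C_mu (Tot_negb hC Tq) => H.
apply: C_ext H _ => x.
have -> : (fun w => (~~ q (cons_tuple w x) : nat) == 0) = (fun w => q (cons_tuple w x)).
  by apply: FunctionalExtensionality.functional_extensionality => w; case: (q _).
case: (ex x) => w qw; have [w' [-> _]] := muf_ex (P := fun w => q (cons_tuple w x)) qw; by [].
Qed.

Lemma Tot_ltn k (a b : k.-tuple nat -> nat) : Tot a -> Tot b -> Tot (fun x => a x < b x).
Proof.
move=> Ta Tb; apply: Tot_ext (Tot_iszero hC (TotB hC (TotS hC Ta) Tb)) _ => x.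
by rewrite subn_eq0.
Qed.

Lemma Tot_cons k (P : k.+1.-tuple nat -> nat) (a : k.-tuple nat -> nat) :
  Tot P -> Tot a -> Tot (fun x => P (cons_tuple (a x) x)).
Proof.
move=> TP Ta; apply: (Tot_compT hC TP) => -[|i] /= Hi //.
exact: Tot_nth.
Qed.

Lemma Tot_behead k (g : k.-tuple nat -> nat) : Tot g -> Tot (fun t : k.+1.-tuple nat => g (behead_tuple t)).
Proof.
move=> Tg; apply: (Tot_compT hC Tg) => i Hi; rewrite /=.
apply: Tot_ext (Tot_nth hC (_ : i.+1 < k.+1)) _ => // t; by rewrite nth_behead.
Qed.

Lemma Tot_ball k (p : k.+1.-tuple nat -> bool) (b : k.-tuple nat -> nat) :
  Tot (fun t => p t : nat) -> Tot b -> Tot (fun x => ball (b x) (fun i => p (cons_tuple i x))).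
Proof.
move=> Tp Tb.
pose G := fun t : k.+2.-tuple nat => cons_tuple (thead t) (behead_tuple (behead_tuple t)).
have TpG : Tot (fun t => p (G t) : nat).
  apply: (Tot_compT hC Tp) => -[|i] Hi /=.
  - by apply: Tot_ext (Tot_nth hC (isT : 0 < k.+2)) _ => t; rewrite /thead (tnth_nth 0).
  - by apply: Tot_ext (Tot_nth hC (_ : i.+2 < k.+2)) _ => // t; rewrite !nth_behead.
have := Tot_rec hC (Tot_const hC k 1) (TotM hC (Tot_nth hC (isT : 1 < k.+2)) TpG).
move/Tot_cons/(_ Tb) => H; apply: Tot_ext H _ => x.
rewrite behead_cons thead_cons; elim: (b x) => //= n ->.
rewrite /G thead_cons !behead_cons.
by case: (ball _ _); case: (p _).
Qed.

Lemma Tot_bex k (p : k.+1.-tuple nat -> bool) (b : k.-tuple nat -> nat) :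
  Tot (fun t => p t : nat) -> Tot b -> Tot (fun x => bex (b x) (fun i => p (cons_tuple i x))).
Proof. move=> Tp Tb; apply: (Tot_negb hC (a := fun x => ball (b x) (fun i => ~~ p (cons_tuple i x)))); exact: (Tot_ball (Tot_negb hC Tp) Tb). Qed.

End Mu.


Lemma tri_mono m n : m <= n -> tri m <= tri n.
Proof. by move=> mn; rewrite /tri leq_div2r // leq_mul. Qed.

Lemma cpairE a b : cpair a b = tri (a + b) + b.
Proof. by []. Qed.

Definition ss z := odflt 0 (muf (fun s => z < tri s.+1)).

Lemma ss_spec z : tri (ss z) <= z < tri (ss z).+1.
Proof.
have : z < tri z.+1 by rewrite triS; lia.
move/(muf_ex (P := fun s => z < tri s.+1)) => [w [E Pw]].
rewrite /ss E /= Pw andbT.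
case: w E Pw => [|w] E _; first by rewrite /tri.
by move/muf_spec: E => [_ /(_ w (ltnSn w))]; rewrite -leqNgt.
Qed.

Lemma ss_cpair a b : ss (cpair a b) = a + b.
Proof.
rewrite /ss (@muf_eq _ (a + b)) //.
- by rewrite cpairE triS; lia.
- move=> z zlt; rewrite -leqNgt cpairE.
  have := tri_mono zlt; lia.
Qed.

Definition usnd z := z - tri (ss z).
Definition ufst z := ss z - usnd z.

Lemma usnd_cpair a b : usnd (cpair a b) = b.
Proof. by rewrite /usnd ss_cpair cpairE; lia. Qed.

Lemma ufst_cpair a b : ufst (cpair a b) = a.
Proof. by rewrite /ufst usnd_cpair ss_cpair; lia. Qed.

Lemma cpair_unpair z : cpair (ufst z) (usnd z) = z.
Proof.
have := ss_spec z; rewrite triS => /andP [h1 h2].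
rewrite cpairE /ufst /usnd.
have -> : ss z - (z - tri (ss z)) + (z - tri (ss z)) = ss z by lia.
lia.
Qed.

Lemma cpair_inj a b c d : cpair a b = cpair c d -> a = c /\ b = d.
Proof.
move=> e; split; first by rewrite -(ufst_cpair a b) e ufst_cpair.
by rewrite -(usnd_cpair a b) e usnd_cpair.
Qed.

Definition mdiv u d := odflt 0 (muf (fun q => u < q.+1 * d.+1)).

Lemma mdivE u d : mdiv u d = u %/ d.+1.
Proof.
rewrite /mdiv (@muf_eq _ (u %/ d.+1)) //; first exact: ltn_ceil.
move=> z zlt; rewrite -leqNgt.
apply: leq_trans (leq_divM u d.+1); by rewrite leq_mul2r zlt orbT.
Qed.

Lemma DfinE u i : Dfin u i = odd (mdiv u (2 ^ i).-1).
Proof. rewrite mdivE prednK; first by []. by rewrite expn_gt0. Qed.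

Lemma Dfin_exp c i : Dfin (2 ^ c) i = (i == c).
Proof.
rewrite /Dfin; case: (ltngtP i c) => ic.
- rewrite -expnB //; last exact: ltnW. by rewrite oddX orbF subn_eq0 leqNgt ic.
- rewrite divn_small //. by rewrite ltn_exp2l.
- by rewrite ic divnn expn_gt0.
Qed.

Lemma Dfin_lt u i : Dfin u i -> i < u.
Proof.
rewrite /Dfin => H.
have : 0 < u %/ 2 ^ i by case: (u %/ 2 ^ i) H.
rewrite divn_gt0 ?expn_gt0 // => h.
exact: leq_trans (ltn_expl i (isT : 1 < 2)) h.
Qed.

Section Pairs.
Variable C : class.
Hypothesis hC : clos C.
Notation Tot := (Tot C).
Notation Tot1 := (Tot1 C).
Notation Tot2 := (Tot2 C).

Lemma Tot1_ss : Tot1 ss.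
Proof.
have := @Tot_muB _ hC 1 (fun t => nth 0 t 1 < tri (nth 0 t 0).+1).
move/(_ (Tot_ltn hC (Tot_nth hC (isT : 1 < 2)) (Tot_app1 hC (Tot1_tri hC) (TotS hC (Tot_nth hC (isT : 0 < 2)))))).
move=> H; apply: Tot_ext (H _) _.
- move=> x; exists (nth 0 x 0); rewrite /= triS; lia.
- move=> x; by rewrite /thead (tnth_nth 0).
Qed.

Lemma Tot_ss k (a : k.-tuple nat -> nat) : Tot a -> Tot (fun x => ss (a x)).
Proof. move=> Ta; exact: (Tot_app1 hC Tot1_ss Ta). Qed.

Lemma Tot_usnd k (a : k.-tuple nat -> nat) : Tot a -> Tot (fun x => usnd (a x)).
Proof. move=> Ta; exact (TotB hC Ta (Tot_app1 hC (Tot1_tri hC) (Tot_ss Ta))). Qed.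

Lemma Tot_ufst k (a : k.-tuple nat -> nat) : Tot a -> Tot (fun x => ufst (a x)).
Proof. move=> Ta; exact (TotB hC (Tot_ss Ta) (Tot_usnd Ta)). Qed.

Lemma Tot_cpair k (a b : k.-tuple nat -> nat) : Tot a -> Tot b -> Tot (fun x => cpair (a x) (b x)).
Proof. move=> Ta Tb; exact (TotD hC (Tot_app1 hC (Tot1_tri hC) (TotD hC Ta Tb)) Tb). Qed.

Lemma Tot2_mdiv : Tot2 mdiv.
Proof.
have := @Tot_muB _ hC 2 (fun t => nth 0 t 1 < (nth 0 t 0).+1 * (nth 0 t 2).+1).
move/(_ (Tot_ltn hC (Tot_nth hC (isT : 1 < 3)) (TotM hC (TotS hC (Tot_nth hC (isT : 0 < 3))) (TotS hC (Tot_nth hC (isT : 2 < 3)))))).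
move=> H; apply: Tot_ext (H _) _.
- move=> x; exists (nth 0 x 0); rewrite /=; nia.
- by [].
Qed.

Lemma Tot_Dfin k (a b : k.-tuple nat -> nat) : Tot a -> Tot b -> Tot (fun x => Dfin (a x) (b x)).
Proof.
move=> Ta Tb.
have := Tot_app1 hC (Tot1_odd hC) (Tot_app2 hC Tot2_mdiv Ta (Tot_app1 hC (Tot1_pred hC) (Tot_app1 hC (Tot1_exp2 hC) Tb))).
move=> H; apply: Tot_ext H _ => x; by rewrite DfinE.
Qed.

End Pairs.


Lemma code_cons a s y : code_seq (a :: rcons s y) = cpair a (code_seq (rcons s y)).
Proof. by case: s. Qed.

Fixpoint xpartS k z : seq nat := if k is k'.+1 then ufst z :: xpartS k' (usnd z) else [::].
Fixpoint ypartS k z := if k is k'.+1 then ypartS k' (usnd z) else z.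

Lemma size_xpartS k z : size (xpartS k z) = k.
Proof. by elim: k z => //= k IH z; rewrite IH. Qed.

Lemma xpart_code s y : xpartS (size s) (code_seq (rcons s y)) = s /\ ypartS (size s) (code_seq (rcons s y)) = y.
Proof.
elim: s => [//|a s [IH1 IH2]]; rewrite rcons_cons code_cons.
by rewrite [xpartS _ _]/= [ypartS _ _]/= ufst_cpair usnd_cpair IH1 IH2.
Qed.

Lemma code_xpart k z : code_seq (rcons (xpartS k z) (ypartS k z)) = z.
Proof. elim: k z => [//|k IH] z; by rewrite [xpartS _ _]/= [ypartS _ _]/= rcons_cons code_cons IH cpair_unpair. Qed.

Definition xpart k z : k.-tuple nat := @Tuple k nat (xpartS k z) (introT eqP (size_xpartS k z)).

Lemma cr_inj k (x x' : k.-tuple nat) y y' :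
  code_seq (rcons x y) = code_seq (rcons x' y') -> x = x' /\ y = y'.
Proof.
move=> e; have [h1 h2] := xpart_code x y; have [h1' h2'] := xpart_code x' y'.
rewrite !size_tuple e in h1 h2; rewrite !size_tuple in h1' h2'; split; last by rewrite -h2 h2'.
by apply: val_inj; rewrite /= -h1 h1'.
Qed.

Lemma tuple1_eta (t : 1.-tuple nat) : t = [tuple thead t].
Proof. by apply: eq_from_tnth => i; rewrite (ord1 i). Qed.

Section Coding.
Variable C : class.
Hypothesis hC : clos C.
Notation Tot := (Tot C).
Notation Tot1 := (Tot1 C).
Notation Tot2 := (Tot2 C).

Lemma Tot_hd : Tot1 id.
Proof. by apply: Tot_ext (Tot_nth hC (isT : 0 < 1)) _ => t; rewrite /thead (tnth_nth 0). Qed.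

Lemma Tot1_xpart k i : Tot1 (fun z => nth 0 (xpartS k z) i).
Proof.
elim: k i => [|k IH] i /=; first by rewrite /Tot1; apply: Tot_ext (Tot_const hC _ 0) _ => t; rewrite nth_nil.
case: i => [|i]; first exact: (Tot_ufst hC Tot_hd).
exact: (Tot_app1 hC (IH i) (Tot_usnd hC Tot_hd)).
Qed.

Lemma Tot1_ypart k : Tot1 (ypartS k).
Proof.
elim: k => [|k IH] /=; first exact: Tot_hd.
exact: (Tot_app1 hC IH (Tot_usnd hC Tot_hd)).
Qed.

Lemma Tot_cr k : Tot (fun t : k.+1.-tuple nat => code_seq (rcons (behead t) (thead t))).
Proof.
elim: k => [|k IH].
  apply: Tot_ext (Tot_nth hC (isT : 0 < 1)) _ => -[[|y [|a s]] //= _].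
pose G := fun t : k.+2.-tuple nat => cons_tuple (thead t) (behead_tuple (behead_tuple t)).
have TG : Tot (fun t => code_seq (rcons (behead (G t)) (thead (G t)))).
  apply: (Tot_compT hC IH) => -[|i] Hi /=.
  - by apply: Tot_ext (Tot_nth hC (isT : 0 < k.+2)) _ => t; rewrite /thead (tnth_nth 0).
  - by apply: Tot_ext (Tot_nth hC (_ : i.+2 < k.+2)) _ => // t; rewrite !nth_behead.
have := Tot_cpair hC (Tot_nth hC (isT : 1 < k.+2)) TG.
move=> H; apply: Tot_ext H _ => t. rewrite /G thead_cons /thead (tnth_nth 0). case: t => [[|y [|a s]] Hs] //. by rewrite [behead _]/= [nth _ _ _]/= rcons_cons code_cons. Qed.

Lemma C_post k (mu : pfun k) (h : nat -> nat) : C mu -> Tot1 h -> C (fun x => omap h (mu x)).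
Proof.
case: hC => _ _ _ hs _ Cmu Th.
have := hs 1 k _ (fun _ => mu) Th (fun _ => Cmu).
move/C_ext; apply => x; rewrite /subst_fn.
case E: (mu x) => [v|] /=.
- have -> : [forall i : 'I_1, true] by apply/forallP.
  by rewrite /thead tnth_mktuple.
- have -> : [forall i : 'I_1, false] = false by apply/negP => /forallP /(_ ord0).
  by [].
Qed.

Lemma Tot_of_C1 (a : pfun 1) : C a -> (forall m, a [tuple m] <> None) ->
  Tot1 (fun m => odflt 0 (a [tuple m])).
Proof.
move=> Ca H; apply: C_ext Ca _ => t; rewrite -tuple1_eta.
by case E: (a t) => //; move: (H (thead t)); rewrite -tuple1_eta E.
Qed.

Lemma Tot_guard (a : pfun 1) (c : nat -> nat) : C a -> Tot1 c ->
  (forall m, c m = 0 \/ (c m = 1 /\ a [tuple m] <> None)) ->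
  Tot1 (fun m => if c m == 1 then odflt 0 (a [tuple m]) else 0).
Proof.
case: hC => hz _ _ _ [hp _] Ca Tc H.
have Ch : C (fun t : 3.-tuple nat => a [tuple nth 0 t 2]).
  by apply: (C_compT hC Ca) => -[|i] Hi //=; apply: Tot_nth.
have Cp := hp 1 _ _ (hz 1) Ch.
have := C_compT (G := fun t : 1.-tuple nat => [tuple c (thead t); thead t]) hC Cp.
move=> H0.
have H' : C (fun t : 1.-tuple nat => prec_fn (@zero_fn 1) (fun t : 3.-tuple nat => a [tuple nth 0 t 2]) [tuple c (thead t); thead t]).
  apply: H0 => -[|[|i]] Hi //; exact: Tot_hd.
apply: C_ext H' _ => t; rewrite /prec_fn.
have -> : thead [tuple c (thead t); thead t] = c (thead t) by [].
case: (H (thead t)) => [E|[E Hn]]; rewrite E //.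
have -> : prec_aux (@zero_fn 1) (fun t0 : 3.-tuple nat => a [tuple nth 0 t0 2])
    (behead_tuple [tuple 1; thead t]) 1 = a [tuple thead t] by [].
by case E2: (a _) Hn.
Qed.

End Coding.


Lemma tuple2_eta (t : 2.-tuple nat) : t = [tuple nth 0 t 0; nth 0 t 1].
Proof.
apply: eq_from_tnth => -[[|[|i]] Hi] //; by rewrite (tnth_nth 0).
Qed.

Lemma code3 a b c : code_seq (rcons [tuple a; b] c) = cpair a (cpair b c).
Proof. by []. Qed.

Lemma forward (K : class) (F : pfun 2) k (f : pfun k) :
  clos K -> K _ f -> universal K F -> rel_rec f F.
Proof.
move=> hK Kf univ.
pose f' : pfun 1 := fun t => f (xpart k (thead t)).
have Kf' : K _ f'.
  apply: (C_compT hK Kf) => i _ /=; exact: Tot1_xpart.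
have [n Hn] := univ f' Kf'.
pose h z := cpair n (cpair z (ypartS k z)).
have Th : forall C, clos C -> forall l (a : l.-tuple nat -> nat), Tot C a -> Tot C (fun x => h (a x)).
  move=> C hC l a Ta; apply: (Tot_cpair hC (Tot_const hC _ n)); apply: (Tot_cpair hC Ta).
  exact: (Tot_app1 hC (Tot1_ypart hC k) Ta).
pose W w := usnd w = 2 ^ h (ufst w).
exists W; split.
- pose P := fun t : 2.-tuple nat => ~~ (usnd (nth 0 t 1) == 2 ^ h (ufst (nth 0 t 1))).
  have TP : Tot PR (fun t => P t : nat).
    apply: (Tot_negb closed_PR).
    apply: (Tot_eqn closed_PR); first exact: (Tot_usnd closed_PR (Tot_nth closed_PR (isT : 1 < 2))).
    apply: (Tot_app1 closed_PR (Tot1_exp2 closed_PR)).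
    apply: (Th _ closed_PR); exact: (Tot_ufst closed_PR (Tot_nth closed_PR (isT : 1 < 2))).
  exists (fun x => muf (fun w => (P (cons_tuple w x) : nat) == 0)); split; first exact: (C_mu closed_PR TP).
  move=> z; rewrite /P /=.
  split.
  + move=> Wz; apply/muf_none => /(_ (ex_intro _ 0 _)); apply; by rewrite Wz eqxx.
  + move=> H; apply: Classical_Prop.NNPP => nW; apply: H; apply/muf_none => -[w].
    by case: (usnd z =P 2 ^ h (ufst z)) => // e; case: nW.
- move=> z; split.
  + case=> x [y [fxy ->]].
    exists (2 ^ h (code_seq (rcons x y))); split.
      by rewrite /W ufst_cpair usnd_cpair.
    move=> i; rewrite Dfin_exp => /eqP ->.
    have [e1 e2] := xpart_code x y; rewrite size_tuple in e1 e2.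
    exists [tuple n; code_seq (rcons x y)], y; split; last by rewrite code3 /h e2.
    rewrite Hn /f' /=.
    have -> : xpart k (code_seq (rcons x y)) = x by apply: val_inj; rewrite /= e1.
    exact: fxy.
  + case=> u [Wu HF].
    move: Wu; rewrite /W ufst_cpair usnd_cpair => Eu.
    have := HF (h z); rewrite Eu Dfin_exp eqxx => /(_ isT) [t [y' [Ft ez]]].
    move: Ft ez; rewrite (tuple2_eta t) code3 /h => Ft /cpair_inj [e1 /cpair_inj [e2 e3]]; rewrite -e1 -e2 -e3 in Ft.
    exists (xpart k z), (ypartS k z); split; last by rewrite code_xpart.
    rewrite -[LHS]/(f' [tuple z]) -Hn //.
Qed.


Lemma ind_val M c m : indicator M c ->
  (M m /\ c [tuple m] = Some 1) \/ (~ M m /\ c [tuple m] = Some 0).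
Proof.
move=> /(_ m) [h1 h2]; case: (Classical_Prop.classic (M m)) => Mm.
- by left; split => //; apply: h1.
- by right; split => //; apply: h2.
Qed.

Definition gd (c a : pfun 1) m := if odflt 0 (c [tuple m]) == 1 then odflt 0 (a [tuple m]) else 0.

Lemma gd1 M c m : indicator M c -> odflt 0 (c [tuple m]) == 1 -> M m.
Proof. by move=> /(ind_val m) [[]|[_ ->]]. Qed.

Lemma gd2 M c m : indicator M c -> M m -> odflt 0 (c [tuple m]) == 1.
Proof. by move=> /(ind_val m) [[_ ->]|[]]. Qed.

Lemma gd3 M c a m : indicator M c -> (forall m, M m -> a [tuple m] <> None) -> M m ->
  a [tuple m] = Some (gd c a m).
Proof.
move=> ind dom Mm; rewrite /gd (gd2 ind Mm).
by case E: (a _) (dom m Mm).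
Qed.

Lemma bound_ex (P : nat -> Prop) (Q : nat -> nat -> Prop) n :
  (forall i, i < n -> P i -> exists m, Q i m) ->
  exists B, forall i, i < n -> P i -> exists m, m < B /\ Q i m.
Proof.
elim: n => [|n IH] H; first by exists 0.
have [B HB] := IH (fun i ilt => H i (ltnW ilt)).
case: (Classical_Prop.classic (P n)) => Pn.
- have [m Qm] := H n (ltnSn n) Pn.
  exists (maxn B m.+1) => i; rewrite ltnS leq_eqVlt => /orP [/eqP -> _|ilt Pi].
  + by exists m; split => //; rewrite leq_max leqnn orbT.
  + have [m' [m'lt Qm']] := HB i ilt Pi; exists m'; split => //.
    by rewrite leq_max m'lt.
- exists B => i; rewrite ltnS leq_eqVlt => /orP [/eqP -> //|ilt Pi].
  exact: HB.
Qed.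

Section Good.
Variables cg ag cF aF oF : nat -> nat.

Definition U k (t : k.+1.-tuple nat) := ufst (usnd (thead t)).
Definition Bd k (t : k.+1.-tuple nat) := usnd (usnd (usnd (thead t))).
Definition M0 k (t : k.+1.-tuple nat) := ufst (usnd (usnd (thead t))).
Definition Y k (t : k.+1.-tuple nat) := ufst (thead t).

Definition qq k (s : k.+3.-tuple nat) :=
  (cF (thead s) == 1) && (aF (thead s) == cpair (ufst (thead (behead_tuple s))) (ufst (usnd (thead (behead_tuple s)))))
   && (oF (thead s) == usnd (usnd (thead (behead_tuple s)))).
Definition pp k (s : k.+2.-tuple nat) :=
  Dfin (U (behead_tuple s)) (thead s) ==> bex (Bd (behead_tuple s)) (fun m => qq (cons_tuple m s)).
Definition Good k (t : k.+1.-tuple nat) :=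
  (cg (M0 t) == 1) && (ag (M0 t) == cpair (code_seq (rcons (behead t) (Y t))) (U t))
  && ball (U t) (fun i => pp (cons_tuple i t)).

Variable C : class.
Hypothesis hC : clos C.
Hypotheses (Tcg : Tot1 C cg) (Tag : Tot1 C ag) (TcF : Tot1 C cF) (TaF : Tot1 C aF) (ToF : Tot1 C oF).

Lemma Tot_thead k : Tot C (fun t : k.+1.-tuple nat => thead t).
Proof. by apply: Tot_ext (Tot_nth hC (isT : 0 < k.+1)) _ => t; rewrite /thead (tnth_nth 0). Qed.

Lemma Tot_thead2 k : Tot C (fun t : k.+2.-tuple nat => thead (behead_tuple t)).
Proof. by apply: Tot_ext (Tot_nth hC (isT : 1 < k.+2)) _ => t; rewrite /thead (tnth_nth 0) /= nth_behead. Qed.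

Lemma Tot_Good k : Tot C (fun t : k.+1.-tuple nat => Good t).
Proof.
have T1 := Tot_thead k.
have TU : forall l, Tot C (fun t : l.+1.-tuple nat => U t).
  move=> l; exact: (Tot_ufst hC (Tot_usnd hC (Tot_thead l))).
have TB : forall l, Tot C (fun t : l.+1.-tuple nat => Bd t).
  move=> l; exact: (Tot_usnd hC (Tot_usnd hC (Tot_usnd hC (Tot_thead l)))).
have TM0 : Tot C (fun t : k.+1.-tuple nat => M0 t).
  exact: (Tot_ufst hC (Tot_usnd hC (Tot_usnd hC T1))).
have Tz : Tot C (fun t : k.+1.-tuple nat => code_seq (rcons (behead t) (Y t))).
  have := Tot_compT hC (Tot_cr hC k) (G := fun t : k.+1.-tuple nat => cons_tuple (Y t) (behead_tuple t)).
  move=> H; apply: Tot_ext (H _) _ => [[|i] Hi|t]; last by rewrite thead_cons.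
  - exact: (Tot_ufst hC T1).
  - by apply: Tot_ext (Tot_nth hC (_ : i.+1 < k.+1)) _ => // t /=; rewrite nth_behead.
have Tq : forall l, Tot C (fun s : l.+3.-tuple nat => qq s).
  move=> l; have T0 := Tot_thead l.+2; have T2 := Tot_thead2 l.+1.
  apply: (Tot_andb hC); first apply: (Tot_andb hC).
  - exact: (Tot_eqn hC (Tot_app1 hC TcF T0) (Tot_const hC _ 1)).
  - exact: (Tot_eqn hC (Tot_app1 hC TaF T0) (Tot_cpair hC (Tot_ufst hC T2) (Tot_ufst hC (Tot_usnd hC T2)))).
  - exact: (Tot_eqn hC (Tot_app1 hC ToF T0) (Tot_usnd hC (Tot_usnd hC T2))).
have Tp : Tot C (fun s : k.+2.-tuple nat => pp s).
  apply: (Tot_implb hC).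
  - exact: (Tot_Dfin hC (Tot_behead hC (TU k)) (Tot_thead k.+1)).
  - exact: (Tot_bex hC (Tq k) (Tot_behead hC (TB k))).
apply: (Tot_andb hC); first apply: (Tot_andb hC).
- exact: (Tot_eqn hC (Tot_app1 hC Tcg TM0) (Tot_const hC _ 1)).
- exact: (Tot_eqn hC (Tot_app1 hC Tag TM0) (Tot_cpair hC Tz (TU k))).
- exact: (Tot_ball hC Tp (TU k)).
Qed.

End Good.

Lemma Good_cons cg ag cF aF oF k (x : k.-tuple nat) w :
  Good cg ag cF aF oF (cons_tuple w x) =
  (cg (ufst (usnd (usnd w))) == 1) &&
      (ag (ufst (usnd (usnd w))) == cpair (code_seq (rcons x (ufst w))) (ufst (usnd w))) &&
      ball (ufst (usnd w)) (fun i => Dfin (ufst (usnd w)) i ==>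
        bex (usnd (usnd (usnd w))) (fun m => (cF m == 1) &&
             (aF m == cpair (ufst i) (ufst (usnd i))) && (oF m == usnd (usnd i)))).
Proof. reflexivity. Qed.


Lemma backward (K : class) (F : pfun 2) k (f : pfun k) :
  hyp1 K -> hyp2 K -> K _ F -> rel_rec f F -> K _ f.
Proof.
move=> h1 h2 KF [W [[g [PRg HW]] red]].
have hK := closed_K h1.
have Kg : K _ g by case: h1 => H _; exact: H.
have [Mg [ag [og [cg [Kag [Kog [domg [Kcg [indg Hg]]]]]]]]] := h2 g Kg.
pose F' : pfun 1 := fun t => F [tuple ufst (thead t); usnd (thead t)].
have KF' : K _ F'.
  apply: (C_compT hK KF) => -[|[|i]] Hi //=.
  - exact: (Tot_ufst hK (Tot_hd hK)).
  - exact: (Tot_usnd hK (Tot_hd hK)).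
have [MF [aF [oF [cF [KaF [KoF [domF [KcF [indF HF]]]]]]]]] := h2 F' KF'.
have Tc : forall M (c : pfun 1), K _ c -> indicator M c -> Tot1 K (fun m => odflt 0 (c [tuple m])).
  move=> M c Kc ind; apply: (Tot_of_C1 Kc) => m.
  by case: (ind_val m ind) => -[_ ->].
have Tg : forall M (c a : pfun 1), K _ c -> indicator M c -> K _ a ->
    (forall m, M m -> a [tuple m] <> None) -> Tot1 K (gd c a).
  move=> M c a Kc ind Ka dom.
  apply: (Tot_guard hK Ka (Tc M c Kc ind)) => m.
  case: (ind_val m ind) => -[Mm ->]; [right; split => //; exact: dom | by left].
pose cg' m := odflt 0 (cg [tuple m]).
pose cF' m := odflt 0 (cF [tuple m]).
pose GD (t : k.+1.-tuple nat) := Good cg' (gd cg ag) cF' (gd cF aF) (gd cF oF) t.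
have TG : Tot K (fun t => GD t : nat) := Tot_Good hK (Tc _ _ Kcg indg) (Tg _ _ _ Kcg indg Kag (fun m Mm => (domg m Mm).1))
  (Tc _ _ KcF indF) (Tg _ _ _ KcF indF KaF (fun m Mm => (domF m Mm).1))
  (Tg _ _ _ KcF indF KoF (fun m Mm => (domF m Mm).2)) k.
have Cmu := C_mu hK (Tot_negb hK TG).
have Cpost := C_post hK Cmu (Tot_ufst hK (Tot_hd hK)).
have sound : forall x w, GD (cons_tuple w x) -> f x = Some (ufst w).
  move=> x w; rewrite /GD Good_cons => /andP [/andP [c0 a0] bl].
  have Mm0 := gd1 indg c0.
  have ag0 : ag [tuple ufst (usnd (usnd w))] = Some (cpair (code_seq (rcons x (ufst w))) (ufst (usnd w))).
    by rewrite (gd3 indg (fun m Mm => (domg m Mm).1) Mm0) (eqP a0).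
  have Wz : W (cpair (code_seq (rcons x (ufst w))) (ufst (usnd w))).
    apply/HW; case Eo: (og [tuple ufst (usnd (usnd w))]) (domg _ Mm0).2 => [b|] // _.
    have -> // : g [tuple cpair (code_seq (rcons x (ufst w))) (ufst (usnd w))] = Some b.
    by apply/Hg; exists (ufst (usnd (usnd w))).
  have GF : forall i, Dfin (ufst (usnd w)) i -> graph F i.
    move=> i Di; move/ballP: bl => /(_ i (Dfin_lt Di)); rewrite Di /=.
    move=> /bexP [m [_ /andP [/andP [c1 a1] o1]]].
    have MFm := gd1 indF c1.
    have aFm : aF [tuple m] = Some (cpair (ufst i) (ufst (usnd i))).
      by rewrite (gd3 indF (fun m Mm => (domF m Mm).1) MFm) (eqP a1).
    have oFm : oF [tuple m] = Some (usnd (usnd i)).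
      by rewrite (gd3 indF (fun m Mm => (domF m Mm).2) MFm) (eqP o1).
    have : F' [tuple cpair (ufst i) (ufst (usnd i))] = Some (usnd (usnd i)).
      by apply/HF; exists m.
    rewrite /F' /= ufst_cpair usnd_cpair => HFi.
    exists [tuple ufst i; ufst (usnd i)], (usnd (usnd i)); split => //.
    by rewrite code3 !cpair_unpair.
  have := (red (code_seq (rcons x (ufst w)))).2 (ex_intro _ _ (conj Wz GF)).
  case=> x' [y' [fx' e]]; have [ex ey] := cr_inj e; by rewrite ex ey.
have complete : forall x y, f x = Some y -> exists w, GD (cons_tuple w x).
  move=> x y fxy.
  have gz : graph f (code_seq (rcons x y)) by exists x, y.
  have [u [Wz GF]] := (red _).1 gz.
  have [b gb] : exists b, g [tuple cpair (code_seq (rcons x y)) u] = Some b.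
    by move/HW: Wz; case: (g _) => [b|] //; exists b.
  have [m0 [Mm0 [am0 _]]] := (Hg _ _).1 gb.
  have Hi : forall i, i < u -> Dfin u i -> exists m, (cF' m == 1) &&
      (gd cF aF m == cpair (ufst i) (ufst (usnd i))) && (gd cF oF m == usnd (usnd i)).
    move=> i _ Di; have [t [c [Ft ei]]] := GF i Di.
    have : F' [tuple cpair (nth 0 t 0) (nth 0 t 1)] = Some c.
      by rewrite /F' /= ufst_cpair usnd_cpair -tuple2_eta.
    move/HF => [m [MFm [am om]]].
    have ei' : i = cpair (nth 0 t 0) (cpair (nth 0 t 1) c).
      by rewrite ei {1}(tuple2_eta t).
    exists m; rewrite /cF' /gd (gd2 indF MFm) am om /= ei'.
    rewrite !ufst_cpair. idtac "H". rewrite !usnd_cpair. idtac "I". rewrite ufst_cpair. idtac "J". by rewrite !eqxx.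
  have [B HB] := bound_ex Hi.
  exists (cpair y (cpair u (cpair m0 B))).
  rewrite /GD Good_cons !(ufst_cpair, usnd_cpair).
  apply/andP; split; first (apply/andP; split).
  - exact: (gd2 indg Mm0).
  - by rewrite /gd (gd2 indg Mm0) am0.
  - apply/ballP => i ilt; apply/implyP => Di; have [m [mlt Hm]] := HB i ilt Di.
    by apply/bexP; exists m.
apply: C_ext Cpost _ => x.
have -> : (fun w => (~~ GD (cons_tuple w x) : nat) == 0) = (fun w => GD (cons_tuple w x)).
  by apply: functional_extensionality => w; case: (GD _).
case E: (f x) => [y|].
- have [w Gw] := complete x y E.
  have [w' [-> Gw']] := muf_ex (P := fun w => GD (cons_tuple w x)) Gw.
  by move: (sound x w' Gw'); rewrite E /= => ->.
- case E2: (muf _) => [w'|] //=.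
  by move/muf_spec: E2 => [/sound]; rewrite E.
Qed.


Theorem lemma1 (K : class) :
  hyp1 K -> hyp2 K -> hyp3 K ->
  forall F : pfun 2, K 2 F -> universal K F ->
  forall (k : nat) (f : pfun k), K k f <-> rel_rec f F.
Proof.
move=> h1 h2 _ F KF univ k f; split.
- move=> Kf; exact: (forward (closed_K h1) Kf univ).
- exact: backward h1 h2 KF.
Qed.
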